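(* Let $\lambda>0$, $n_{\rm eff}>1$, $D_1>0$ and $D_2\ge 0$ be real numbers, and let $n\ge 1$ be an integer. Define $f(x)=\left(x^2+D_1\right)^{1/2}+n_{\rm eff}\,(x+D_2)$, let $\delta=f(0)\bmod\lambda\in[0,\lambda)$, and set $$k_n^*=\frac{f(0)-\delta}{\lambda}+\left\lceil \frac{\delta}{\lambda}\right\rceil+(n-1).$$ If $\Delta^*\ge 0$ is a real number satisfying $\left((\Delta^* )^2+D_1\right)^{1/2}+n_{\rm eff}\,(D_2+\Delta^* )=k_n^*\lambda$, then $\Delta^*<n\lambda$.
   Context: This arises in placing the $n$-th pinching antenna on a dielectric waveguide: $\lambda$ is the carrier wavelength, $n_{\rm eff}$ the effective refractive index of the waveguide, $D_1=y_m^2+d^2$ (with $d>0$ the waveguide height and $(x_m,y_m,0)$ the user location), $D_2=L+x_m\ge 0$, and $\Delta^*$ is the (nonnegative) offset of the antenna from the point on the waveguide closest to the user. $\lceil a\rceil$ denotes the ceiling of $a$. *)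

(* Defs.v *)
From Stdlib Require Import Reals.
Open Scope R_scope.

(* floor: Stdlib's Int_part x = up x - 1 is the floor of x *)
Definition Rfloor (x : R) : R := IZR (Int_part x).
Definition Rceil (x : R) : R := - Rfloor (- x).
Definition Rmod (a b : R) : R := a - b * Rfloor (a / b).

Definition f_pin (D1 D2 neff x : R) : R := sqrt (x ^ 2 + D1) + neff * (x + D2).

(* Main.v *)
Require Import Defs.
From Stdlib Require Import Reals Lra.
Open Scope R_scope.

Lemma Rceil_lt (x : R) : Rceil x < x + 1.
Proof.
  unfold Rceil, Rfloor. destruct (base_Int_part (- x)) as [_ H]. lra.
Qed.

Theorem proposition2 (lambda neff D1 D2 : R) (n : nat) (Delta : R) :
  0 < lambda -> 1 < neff -> 0 < D1 -> 0 <= D2 -> (1 <= n)%nat ->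
  let delta := Rmod (f_pin D1 D2 neff 0) lambda in
  let kn := (f_pin D1 D2 neff 0 - delta) / lambda + Rceil (delta / lambda)
            + (INR n - 1) in
  0 <= Delta ->
  sqrt (Delta ^ 2 + D1) + neff * (D2 + Delta) = kn * lambda ->
  Delta < INR n * lambda.
Proof.
  intros Hl Hn HD1 HD2 Hn1 delta kn HD Heq.
  set (F0 := f_pin D1 D2 neff 0) in *.
  assert (Hc := Rceil_lt (delta / lambda)).
  assert (Hk : kn * lambda < F0 + INR n * lambda).
  { unfold kn.
    assert (E : ((F0 - delta) / lambda + Rceil (delta / lambda) + (INR n - 1)) * lambda
               = (F0 - delta) + Rceil (delta / lambda) * lambda + (INR n - 1) * lambda)
      by (field; lra).
    rewrite E.
    assert (Rceil (delta / lambda) * lambda < (delta / lambda + 1) * lambda)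
      by (apply Rmult_lt_compat_r; lra).
    assert (E2 : (delta / lambda + 1) * lambda = delta + lambda) by (field; lra).
    lra. }
  assert (Hs : sqrt D1 <= sqrt (Delta ^ 2 + D1)).
  { apply sqrt_le_1_alt. assert (0 <= Delta ^ 2) by (apply pow2_ge_0). lra. }
  assert (HF : F0 = sqrt D1 + neff * D2).
  { unfold F0, f_pin. f_equal. f_equal. ring. ring. }
  assert (neff * Delta >= Delta) by nra.
  nra.
Qed.
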